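(* Let $f:2^N\to\mathbb R_{\ge0}$ be monotone submodular, $|N|=n$ with $\sqrt n$ an integer, $1\le k\le n$, and $S^\star\in\arg\max_{|T|\le k}f(T)$. If $\mathbb E_{S\sim\mathcal D_{\sqrt n}}[f(S)]\ge f(S^\star)/4$, then a uniformly random set $S$ of size $k$ satisfies $\mathbb E[f(S)]\ge\min(1/4,\,k/(4\sqrt n))\,f(S^\star)$.
   Context: $\mathcal D_j$ denotes the uniform distribution over subsets of $N$ of size $j$. $f$ monotone: $f(A)\le f(B)$ for $A\subseteq B$; submodular: $f(A\cup\{e\})-f(A)\ge f(B\cup\{e\})-f(B)$ for $A\subseteq B$. *)

(* Defs.v *)
From mathcomp Require Import all_boot all_order all_algebra.
Set Implicit Arguments. Unset Strict Implicit. Unset Printing Implicit Defensive.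
Import Order.TTheory GRing.Theory Num.Theory.
Local Open Scope ring_scope.

Definition monotone_setfun (R : realFieldType) (N : finType) (f : {set N} -> R) :=
  forall A B : {set N}, A \subset B -> f A <= f B.

Definition submodular_setfun (R : realFieldType) (N : finType) (f : {set N} -> R) :=
  forall (A B : {set N}) (e : N), A \subset B ->
    f (e |: B) - f B <= f (e |: A) - f A.

(* E_{S ~ D_j}[f S], where D_j is the uniform distribution over subsets of N of
   size j (0 <= j <= |N|, so that the support is nonempty). *)
Definition expect_unif (R : realFieldType) (N : finType) (f : {set N} -> R) (j : nat) : R :=
  (\sum_(S : {set N} | #|S| == j) f S) / ('C(#|N|, j))%:R.

(* Main.v *)
Require Import Defs.
From mathcomp Require Import all_boot all_order all_algebra ring lra.
Import Order.TTheory GRing.Theory Num.Theory.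
Local Open Scope ring_scope.

Section Aux.
Variables (R : realFieldType) (N : finType).

Lemma dc (F : {set N} -> N -> R) (j : nat) :
  \sum_(T : {set N} | #|T| == j.+1) \sum_(e in T) F (T :\ e) e =
  \sum_(S : {set N} | #|S| == j) \sum_(e in ~: S) F S e.
Proof.
rewrite (pair_big_dep (fun T : {set N} => #|T| == j.+1) (fun T e => e \in T)
  (fun T e => F (T :\ e) e)) /=.
rewrite (pair_big_dep (fun T : {set N} => #|T| == j) (fun T e => e \in ~: T)
  (fun T e => F T e)) /=.
rewrite (reindex_onto (fun q : {set N} * N => (q.2 |: q.1, q.2))
   (fun p : {set N} * N => (p.1 :\ p.2, p.2))) /=; last first.
  by case=> T e /= /andP[_ eT]; rewrite setD1K.
apply: eq_big.
  case=> S e /=; rewrite in_setC setU11 andbT.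
  case eS: (e \in S).
    rewrite andbF; apply/negbTE/negP => /andP[_ /eqP [] /setP /(_ e)].
    by rewrite !inE eqxx eS.
  rewrite setU1K ?eS // eqxx andbT cardsU1 eS add1n eqSS.
  by rewrite andbT.
by case=> S e /= /andP[_ /eqP [->]].
Qed.

Lemma telesc (f : {set N} -> R) : submodular_setfun f ->
  forall T : {set N}, \sum_(e in T) (f T - f (T :\ e)) <= f T - f set0.
Proof.
move=> sub T; move Hn: #|T| => n; elim: n T Hn => [|n IH] T Hn.
  move/eqP: Hn; rewrite cards_eq0 => /eqP ->.
  by rewrite big_set0 subrr.
have [x xT] : exists x, x \in T.
  by apply/set0Pn; rewrite -card_gt0 Hn.
rewrite (bigD1 x) //=.
have IH' := IH (T :\ x) _.
have cT' : #|T :\ x| = n by move: (cardsD1 x T); rewrite xT Hn add1n => -[].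
have := IH' cT'.
have le : \sum_(i in T | i != x) (f T - f (T :\ i)) <=
          \sum_(i in T :\ x) (f (T :\ x) - f (T :\ x :\ i)).
  rewrite [X in _ <= X](eq_bigl (fun i => (i \in T) && (i != x))); last first.
    by move=> i; rewrite in_setD1 andbC.
  apply: ler_sum => e /andP[eT ex].
  have e1 : e |: (T :\ e) = T by rewrite setD1K.
  have e2 : e |: (T :\ x :\ e) = T :\ x by rewrite setD1K // in_setD1 ex.
  have := sub (T :\ x :\ e) (T :\ e) e.
  rewrite e1 e2; apply.
  by rewrite setDSS ?subsetDl.
move=> H; have := lerD (lexx (f T - f (T :\ x))) (le_trans le H).
by rewrite addrA subrK.
Qed.

Lemma aux1 (a b p q s t: R): 0<a -> 0<b -> 0<p -> 0<q -> q*b = p*a -> p*s <= q*t -> s/a <= t/b.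
Proof.
move=> a0 b0 p0 q0 e h.
have -> : s / a = (p * s) / (q * b) by rewrite e; field; rewrite ?gt_eqF.
have -> : t / b = (q * t) / (q * b) by field; rewrite ?gt_eqF.
by rewrite ler_pM2r // invr_gt0 mulr_gt0.
Qed.
Lemma aux2 (a b p q s t r: R): 0<a -> 0<b -> 0<p -> 0<q -> q*b = p*a -> r*t <= p*s -> r*(t/b) <= q*(s/a).
Proof.
move=> a0 b0 p0 q0 e h.
have -> : r * (t / b) = (q * (r * t)) / (q * b) by field; rewrite ?gt_eqF.
have -> : q * (s / a) = (q * (p * s)) / (q * b) by rewrite e; field; rewrite ?gt_eqF.
by rewrite ler_pM2r ?ler_pM2l // invr_gt0 mulr_gt0.
Qed.

Definition ssum (f : {set N} -> R) j := \sum_(S : {set N} | #|S| == j) f S.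

Lemma cbin (j : nat) : (j < #|N|)%N ->
  (j.+1)%:R * ('C(#|N|, j.+1))%:R = (#|N| - j)%:R * ('C(#|N|, j))%:R :> R.
Proof. by move=> _; rewrite -!natrM mul_bin_left. Qed.

Lemma binpos (j : nat) : (j <= #|N|)%N -> 0 < ('C(#|N|, j))%:R :> R.
Proof. by move=> h; rewrite ltr0n bin_gt0. Qed.

Lemma step_mono (f : {set N} -> R) j : monotone_setfun f -> (j < #|N|)%N ->
  expect_unif f j <= expect_unif f j.+1.
Proof.
move=> mon hj; rewrite /expect_unif.
apply: (@aux1 _ _ (#|N| - j)%:R (j.+1)%:R).
- exact: binpos (ltnW hj).
- exact: binpos hj.
- by rewrite ltr0n subn_gt0.
- by [].
- exact: cbin.
rewrite mulr_sumr mulr_sumr.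
apply: (@le_trans _ _ (\sum_(S : {set N} | #|S| == j) \sum_(e in ~: S) f (e |: S))).
  apply: ler_sum => S /eqP hS.
  apply: (@le_trans _ _ (\sum_(e in ~: S) f S)).
    by rewrite sumr_const cardsCs setCK hS mulr_natl.
  by apply: ler_sum => e _; apply: mon; rewrite subsetUr.
rewrite -(dc (fun S e => f (e |: S))).
rewrite le_eqVlt; apply/orP; left; apply/eqP; apply: eq_bigr => T /eqP hT.
rewrite mulr_natl -hT -sumr_const.
by apply: eq_bigr => e eT; rewrite setD1K.
Qed.

Lemma step_sub (f : {set N} -> R) j : (forall S, 0 <= f S) ->
  submodular_setfun f -> (j < #|N|)%N ->
  j%:R * expect_unif f j.+1 <= (j.+1)%:R * expect_unif f j.
Proof.
move=> pos sub hj; rewrite /expect_unif.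
apply: (@aux2 _ _ (#|N| - j)%:R).
- exact: binpos (ltnW hj).
- exact: binpos hj.
- by rewrite ltr0n subn_gt0.
- by [].
- exact: cbin.
rewrite mulr_sumr mulr_sumr.
apply: (@le_trans _ _ (\sum_(T : {set N} | #|T| == j.+1) \sum_(e in T) f (T :\ e))).
  apply: ler_sum => T /eqP hT.
  have := @telesc f sub T.
  rewrite sumrB sumr_const hT => H.
  have H2 : (j.+1)%:R * f T - \sum_(e in T) f (T :\ e) <= f T.
    by rewrite mulr_natl; apply: le_trans H _; rewrite lerBlDr lerDl pos.
  move: H2; rewrite -natr1 mulrDl mul1r; lra.
rewrite (dc (fun S e => f S)).
rewrite le_eqVlt; apply/orP; left; apply/eqP; apply: eq_bigr => S /eqP hS.
by rewrite sumr_const cardsCs setCK hS mulr_natl.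
Qed.

End Aux.

Lemma chain_mono (R : realFieldType) (N : finType) (f : {set N} -> R) a d :
  monotone_setfun f -> (a + d <= #|N|)%N -> expect_unif f a <= expect_unif f (a + d).
Proof.
move=> mon; elim: d => [|d IH] h; first by rewrite addn0.
have h' : (a + d <= #|N|)%N by apply: leq_trans h; rewrite leq_add2l.
apply: le_trans (IH h') _.
rewrite addnS; apply: step_mono => //; by rewrite -addnS.
Qed.

Lemma chain_sub (R : realFieldType) (N : finType) (f : {set N} -> R) a d :
  (forall S, 0 <= f S) -> submodular_setfun f -> (1 <= a)%N ->
  (a + d <= #|N|)%N ->
  a%:R * expect_unif f (a + d) <= (a + d)%:R * expect_unif f a.
Proof.
move=> pos sub a1; elim: d => [|d IH] h; first by rewrite addn0.
have h' : (a + d <= #|N|)%N by apply: leq_trans h; rewrite leq_add2l.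
have IH' := IH h'.
have hlt : (a + d < #|N|)%N by rewrite -addnS.
have st := @step_sub R N f (a + d) pos sub hlt.
rewrite addnS.
have p1 : 0 < (a + d)%:R :> R by rewrite ltr0n; apply: leq_trans a1 (leq_addr _ _).
rewrite -(ler_pM2l p1).
move: IH' st.
set x := expect_unif f (a + d).+1; set y := expect_unif f (a + d); set z := expect_unif f a.
move=> h1 h2.
have a0 : 0 <= a%:R :> R by [].
have t1 := ler_wpM2l a0 h2.
have t2 := ler_wpM2l (ler0n R (a + d).+1) h1.
move: t1 t2; rewrite !mulrA; move: ((a + d)%:R) ((a+d).+1%:R) (a%:R) => A B C t1 t2.
lra.
Qed.

Theorem lemma23 (R : realFieldType) (N : finType) (f : {set N} -> R)
  (m k : nat) (Sstar : {set N}) :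
  (forall S, 0 <= f S) ->
  monotone_setfun f ->
  submodular_setfun f ->
  #|N| = (m * m)%N ->
  (1 <= k <= #|N|)%N ->
  (#|Sstar| <= k)%N ->
  (forall T : {set N}, (#|T| <= k)%N -> f T <= f Sstar) ->
  expect_unif f m >= f Sstar / 4 ->
  expect_unif f k >= Num.min (1 / 4) (k%:R / (4 * m%:R)) * f Sstar.
Proof.
move=> pos mon sub hN /andP[k1 kN] _ _ hm.
have fs0 := pos Sstar.
have m1 : (1 <= m)%N.
  case: m hN hm => [|m'] // hN; move: kN; rewrite hN muln0 => kN.
  by move: (leq_trans k1 kN).
have mN : (m <= #|N|)%N by rewrite hN leq_pmulr.
have [mk|km] := leqP m k.
  have := @chain_mono _ _ f m (k - m) mon; rewrite subnKC // => /(_ kN) H.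
  apply: le_trans _ (le_trans hm H).
  apply: le_trans (ler_wpM2r fs0 (_ : _ <= 1 / 4)) _; first by rewrite ge_min lexx.
  by rewrite mul1r mulrC.
have := @chain_sub _ _ f k (m - k) pos sub k1; rewrite subnKC ?(ltnW km) // => /(_ mN) H.
have mp : 0 < m%:R :> R by rewrite ltr0n.
have H2 : k%:R * (f Sstar / 4) <= m%:R * expect_unif f k.
  apply: le_trans H; rewrite ler_wpM2l //.
apply: (@le_trans _ _ (k%:R / (4 * m%:R) * f Sstar)).
  rewrite ler_wpM2r // ge_min lexx orbT //.
rewrite -(ler_pM2l mp).
apply: le_trans H2.
rewrite le_eqVlt; apply/orP; left; apply/eqP; field.
by rewrite gt_eqF.
Qed.
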